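(* For all integers $d\ge2$ and $k\ge2$ there is an instance $H$ of the MAX-$k$-local Hamiltonian problem on qudits of dimension $d$, with optimal value $\mathrm{OPT}>0$, such that every product state assignment $\sigma=\sigma_1\otimes\cdots\otimes\sigma_n$ has value $\mathrm{Tr}(H\sigma)\le \mathrm{OPT}/d^{\lfloor k/2\rfloor}$. In particular, for $k=2$ the bound $\mathrm{OPT}/d^{k-1}$ achievable by product states is tight.
   Context: MAX-$k$-local Hamiltonian on $d$-level systems (qudits): an instance on $n$ qudits (Hilbert space $(\mathbb{C}^d)^{\otimes n}$) consists of one Hermitian matrix $H_{i_1,\ldots,i_k}$ for each $k$-element subset $\{i_1,\ldots,i_k\}$ of the qudits; each $H_{i_1,\ldots,i_k}$ acts nontrivially only on those $k$ qudits, is positive semidefinite, and has operator norm at most $1$. Put $H=\sum H_{i_1,\ldots,i_k}$. An assignment is any state $\rho$ on the $n$ qudits, with value $\mathrm{Tr}(H\rho)$; $\mathrm{OPT}$ is the largest eigenvalue of $H$. *)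

(* Defs.v *)
From HB Require Import structures.
From mathcomp Require Import all_boot all_order all_algebra.
From mathcomp Require Import reals.
From mathcomp Require Export complex.
Set Implicit Arguments. Unset Strict Implicit. Unset Printing Implicit Defensive.
Import Order.TTheory GRing.Theory Num.Theory.
Local Open Scope ring_scope.

Section Qudits.
Variable R : realType.
Local Notation C := R[i].

Definition adj {m n} (A : 'M[C]_(m, n)) : 'M[C]_(n, m) := (map_mx Num.conj A)^T.

Definition hermitian {n} (A : 'M[C]_n) : Prop := adj A = A.

Definition psd {n} (A : 'M[C]_n) : Prop :=
  hermitian A /\ forall v : 'cV[C]_n, 0 <= (adj v *m A *m v) 0 0.

Definition opnorm_le1 {n} (A : 'M[C]_n) : Prop :=
  forall v : 'cV[C]_n, (adj (A *m v) *m (A *m v)) 0 0 <= (adj v *m v) 0 0.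

Definition density {n} (A : 'M[C]_n) : Prop := psd A /\ \tr A = 1.

Definition largest_eigenvalue {n} (A : 'M[C]_n) (a : C) : Prop :=
  eigenvalue A a /\ forall b, eigenvalue A b -> b <= a.

End Qudits.

(* Computational basis of (C^d)^{\otimes n}: configurations x : 'I_n -> 'I_d. *)
Definition conf (d n : nat) := {ffun 'I_n -> 'I_d}.
Definition qdim (d n : nat) : nat := #|{: conf d n}|.
Definition cf {d n : nat} (i : 'I_(qdim d n)) : conf d n := enum_val i.

Section Local.
Variable R : realType.
Local Notation C := R[i].

Definition agree_out {d n} (S : {set 'I_n}) (x y : conf d n) : bool :=
  [forall j, (j \notin S) ==> (x j == y j)].
Definition agree_in {d n} (S : {set 'I_n}) (x y : conf d n) : bool :=
  [forall j, (j \in S) ==> (x j == y j)].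

(* A acts nontrivially only on the qudits in S, i.e. A = a_S \otimes Id_{S^c}:
   the matrix entry <x|A|y> vanishes unless x,y agree outside S, and otherwise
   depends only on the restrictions of x and y to S. *)
Definition acts_only_on {d n} (S : {set 'I_n}) (A : 'M[C]_(qdim d n)) : Prop :=
  (forall i j, ~~ agree_out S (cf i) (cf j) -> A i j = 0) /\
  (forall i j i' j', agree_out S (cf i) (cf j) -> agree_out S (cf i') (cf j') ->
     agree_in S (cf i) (cf i') -> agree_in S (cf j) (cf j') -> A i j = A i' j').

(* An instance of MAX-k-local Hamiltonian on n qudits of dimension d:
   one term h S for each k-element subset S of the qudits. *)
Definition klocal_instance {d n} (k : nat) (h : {set 'I_n} -> 'M[C]_(qdim d n)) : Prop :=
  forall S : {set 'I_n}, #|S| = k ->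
    [/\ acts_only_on S (h S), psd (h S) & opnorm_le1 (h S)].

Definition hamiltonian {d n} (k : nat) (h : {set 'I_n} -> 'M[C]_(qdim d n)) :
  'M[C]_(qdim d n) := \sum_(S : {set 'I_n} | #|S| == k) h S.

Definition product_state {d n} (s : 'I_n -> 'M[C]_d) : 'M[C]_(qdim d n) :=
  \matrix_(i, j) \prod_(q < n) s q (cf i q) (cf j q).

End Local.

(* Main.v *)
Require Import Defs.
From HB Require Import structures.
From mathcomp Require Import all_boot all_order all_algebra.
From mathcomp Require Import reals complex spectral sesquilinear.
From mathcomp Require Import ring.
Import Order.TTheory GRing.Theory Num.Theory.
Local Open Scope ring_scope.
Set Implicit Arguments. Unset Strict Implicit. Unset Printing Implicit Defensive.

Section Pair.
Variable R : realType.
Local Notation C := R[i].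

Lemma adjE m n (A : 'M[C]_(m, n)) : adj A = (A ^t* )%sesqui.
Proof. by rewrite /adj map_trmx. Qed.

Lemma adjK m n (A : 'M[C]_(m, n)) : adj (adj A) = A.
Proof. by apply/matrixP=> i j; rewrite !mxE conjCK. Qed.

Lemma adjM m n p (A : 'M[C]_(m, n)) (B : 'M[C]_(n, p)) : adj (A *m B) = adj B *m adj A.
Proof. by rewrite /adj map_mxM trmx_mul. Qed.

Lemma adj_unit n (P : 'M[C]_n) : P \is unitarymx -> P *m adj P = 1%:M /\ adj P *m P = 1%:M.
Proof.
move=> Pu; rewrite adjE; split; first exact/unitarymxP.
by rewrite -invmx_unitary // mulVmx // unitarymx_unit.
Qed.

Lemma quad_entry m n p (M : 'M[C]_(m, n)) (A : 'M[C]_n) (N : 'M[C]_(n, p)) i j :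
  (M *m A *m N) i j = (row i M *m A *m col j N) 0 0.
Proof.
rewrite !mxE; apply: eq_bigr => l _; rewrite !mxE; congr (_ * _).
by apply: eq_bigr => l' _; rewrite !mxE.
Qed.

Lemma dens_decomp n (A : 'M[C]_n) : density A -> exists (P : 'M[C]_n) (D : 'rV[C]_n),
  [/\ A = adj P *m diag_mx D *m P, P *m adj P = 1%:M, adj P *m P = 1%:M,
      (forall i, 0 <= D 0 i) & \sum_i D 0 i = 1].
Proof.
move=> [[hA pA] trA].
have nA : A \is normalmx by apply/normalmxP; rewrite -adjE hA.
have := orthomx_spectralP nA.
set P := spectralmx A; set D := spectral_diag A => eA.
have Pu : P \is unitarymx by apply: spectral_unitarymx.
have [PP1 PP2] := adj_unit Pu.
rewrite invmx_unitary // -adjE in eA.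
have eD : P *m A *m adj P = diag_mx D.
  by rewrite eA !mulmxA PP1 mul1mx -mulmxA PP1 mulmx1.
exists P, D; split => //.
  move=> i; have := pA (col i (adj P)).
  suff -> : adj (col i (adj P)) = row i P.
    by rewrite -quad_entry eD mxE eqxx mulr1n.
  by apply/matrixP=> a b; rewrite !mxE conjCK.
by rewrite -mxtrace_diag -eD mxtrace_mulC mulmxA PP2 mul1mx.
Qed.


Lemma pair_bound n (s t : 'M[C]_n) : density s -> density t ->
  0 <= \sum_a \sum_b s b a * t b a <= 1.
Proof.
move=> /dens_decomp [P [D [eS PP1 PP2 D0 D1]]].
move=> /dens_decomp [Q [E [eT QQ1 QQ2 E0 E1]]].
pose W := P *m Q^T.
have eW : W *m adj W = 1%:M.
  rewrite adjM /W -mulmxA (mulmxA Q^T) .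
  have -> : Q^T *m adj Q^T = 1%:M.
    have := congr1 trmx QQ2; rewrite trmx_mul trmx1 /adj trmxK => <-.
    by rewrite -map_trmx trmxK.
  by rewrite mul1mx PP1.
pose N i j := W i j * (W i j)^*.
have N0 i j : 0 <= N i j by apply: mul_conjC_ge0.
have N1 i j : N i j <= 1.
  have : \sum_j N i j = 1.
    have := congr1 (fun M : 'M[C]_n => M i i) eW; rewrite !mxE eqxx mulr1n => <-.
    by apply: eq_bigr => l _; rewrite /N !mxE.
  rewrite (bigD1 j) //= => <-; rewrite lerDl; exact: sumr_ge0.
have eT2 : \sum_a \sum_b s b a * t b a = \sum_i \sum_j D 0 i * E 0 j * N i j.
  have es b a : s b a = \sum_i (P i b)^* * D 0 i * P i a.
    by rewrite eS mxE; apply: eq_bigr => i _; rewrite mul_mx_diag !mxE.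
  have et b a : t b a = \sum_j (Q j b)^* * E 0 j * Q j a.
    by rewrite eT mxE; apply: eq_bigr => i _; rewrite mul_mx_diag !mxE.
  under eq_bigr do under eq_bigr do rewrite es et big_distrlr /=.
  under eq_bigr do rewrite exchange_big /=.
  rewrite exchange_big /=.
  under eq_bigr do under eq_bigr do rewrite exchange_big /=.
  under eq_bigr do rewrite exchange_big /=.
  apply: eq_bigr => i _; apply: eq_bigr => j _.
  rewrite /N /W !mxE rmorph_sum big_distrlr /= mulr_sumr.
  apply: eq_bigr => a _; rewrite mulr_sumr; apply: eq_bigr => b _.
  rewrite !mxE !rmorphM /=; ring.
rewrite eT2; apply/andP; split.
  by apply: sumr_ge0 => i _; apply: sumr_ge0 => j _; do 2?apply: mulr_ge0 => //.
apply: (@le_trans _ _ (\sum_i \sum_j D 0 i * E 0 j)).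
  apply: ler_sum => i _; apply: ler_sum => j _.
  by rewrite -[X in _ <= X]mulr1 ler_wpM2l // mulr_ge0.
by rewrite -big_distrlr /= D1 E1 mulr1.
Qed.


Lemma adj_ge0 n (w : 'cV[C]_n) : 0 <= (adj w *m w) 0 0.
Proof.
rewrite mxE; apply: sumr_ge0 => i _; rewrite !mxE mulrC; exact: mul_conjC_ge0.
Qed.

Lemma dens_diag n (s : 'M[C]_n) z : density s -> 0 <= s z z <= 1.
Proof.
move=> [[hs ps] trs].
have d0 y : 0 <= s y y.
  have := ps (col y 1%:M).
  suff -> : adj (col y 1%:M) = row y (1%:M : 'M[C]_n).
    by rewrite -quad_entry mul1mx mulmx1.
  by apply/matrixP=> a b; rewrite !mxE (@conjC_nat _ (b == y)) eq_sym.
rewrite d0 /= -trs /mxtrace (bigD1 z) //= lerDl; exact: sumr_ge0.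
Qed.

Lemma proj_quad n (A : 'M[C]_n) : adj A = A -> A *m A = A ->
  forall v : 'cV[C]_n, adj v *m A *m v = adj (A *m v) *m (A *m v).
Proof. by move=> hA AA v; rewrite adjM hA !mulmxA -(mulmxA _ A A) AA. Qed.

Lemma proj_psd n (A : 'M[C]_n) : adj A = A -> A *m A = A -> psd A.
Proof. by move=> hA AA; split => // v; rewrite proj_quad // adj_ge0. Qed.

Lemma proj_opnorm n (A : 'M[C]_n) : adj A = A -> A *m A = A -> opnorm_le1 A.
Proof.
move=> hA AA v; set B := 1%:M - A.
have hB : adj B = B by rewrite /B /adj map_mxB map_mx1 linearB /= trmx1 -/(adj A) hA.
have BB : B *m B = B by rewrite /B mulmxBl mul1mx mulmxBr mulmx1 AA subrr subr0.
have e : adj v *m v = adj v *m A *m v + adj v *m B *m v.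
  rewrite -mulmxDl -mulmxDr /B addrC subrK mulmx1 //.
rewrite e (proj_quad hA AA v) (proj_quad hB BB v).
set X := adj (A *m v) *m (A *m v); set Y := adj (B *m v) *m (B *m v).
rewrite [(X + Y) 0 0]mxE lerDl; exact: adj_ge0.
Qed.

Lemma proj_eig n (A : 'M[C]_n) i : A *m A = A -> row i A != 0 -> largest_eigenvalue A 1.
Proof.
move=> AA nz; split.
  by apply/eigenvalueP; exists (row i A) => //; rewrite -row_mul AA scale1r.
move=> b /eigenvalueP [v vA nv].
have : (b * b - b) *: v = 0.
  have := congr1 (mulmx^~ A) vA.
  rewrite -mulmxA AA vA -scalemxAl vA scalerA => e.
  by rewrite scalerBl e subrr.
move/eqP; rewrite scaler_eq0 (negbTE nv) orbF -[X in _ - X](mulr1 b) -mulrBr mulf_eq0.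
by case/orP => [/eqP->|]; [exact: ler01 | rewrite subr_eq0 => /eqP->].
Qed.

Section Main.
Variables (d m r : nat) (z : 'I_d).
Local Notation n := (m + (m + r))%N.
Local Notation N := (qdim d n).

Definition emb (a : {ffun 'I_m -> 'I_d}) : conf d n :=
  [ffun q : 'I_n => match split q with inl j => a j
     | inr q' => match split q' with inl j => a j | inr _ => z end end].

Lemma emb_l a j : emb a (lshift (m + r) j) = a j.
Proof. by rewrite ffunE (unsplitK (inl _ j)). Qed.
Lemma emb_m a j : emb a (rshift m (lshift r j)) = a j.
Proof. by rewrite ffunE (unsplitK (inr _ (lshift r j))) (unsplitK (inl _ j)). Qed.
Lemma emb_r a t : emb a (rshift m (rshift m t)) = z.
Proof. by rewrite ffunE (unsplitK (inr _ (rshift m t))) (unsplitK (inr _ t)). Qed.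

Lemma emb_inj : injective emb.
Proof. by move=> a b e; apply/ffunP => j; rewrite -!emb_l e. Qed.

Definition G : {set conf d n} := emb @: setT.
Definition gx (x : conf d n) : C := (x \in G)%:R.

Lemma cardG : #|G| = (d ^ m)%N.
Proof. by rewrite card_imset ?cardsT ?card_ffun ?card_ord //; exact: emb_inj. Qed.

Lemma L_sum (F : conf d n -> C) : \sum_(i < N) F (cf i) = \sum_x F x.
Proof.
symmetry; rewrite (reindex (@cf d n)) //; apply: onW_bij; exact: enum_val_bij.
Qed.

Lemma G_sum (F : conf d n -> C) : \sum_x gx x * F x = \sum_a F (emb a).
Proof.
rewrite (eq_bigr (fun x => if x \in G then F x else 0)); last first.
  by move=> x _; rewrite /gx; case: (x \in G); rewrite ?mul1r ?mul0r.
rewrite -big_mkcond /= big_imset /=; last by move=> a b _ _; apply: emb_inj.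
by apply: eq_bigl => a; rewrite in_setT.
Qed.


Hypothesis dpos : (0 < d)%N.
Definition cc : C := ((d ^ m)%:R)^-1.
Definition Hm : 'M[C]_N := matrix_of_fun matrix_key (fun a b => cc * (gx (cf a) * gx (cf b))).

Lemma Dnz : ((d ^ m)%:R : C) != 0.
Proof. by rewrite pnatr_eq0 expn_eq0 negb_and -lt0n dpos. Qed.

Lemma gx_emb a : gx (emb a) = 1.
Proof. by rewrite /gx imset_f ?in_setT. Qed.

Lemma sum_gg : \sum_(l < N) gx (cf l) * gx (cf l) = (d ^ m)%:R.
Proof.
rewrite (L_sum (fun y => gx y * gx y)) G_sum.
under eq_bigr do rewrite gx_emb.
by rewrite sumr_const card_ffun !card_ord.
Qed.

Lemma Hm_idem : Hm *m Hm = Hm.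
Proof.
apply/matrixP => i j; rewrite !mxE.
rewrite (eq_bigr (fun l => cc * cc * (gx (cf i) * gx (cf j)) * (gx (cf l) * gx (cf l)))); last first.
  by move=> l _; rewrite !mxE; ring.
rewrite -mulr_sumr sum_gg.
have cD : cc * (d ^ m)%:R = 1 by rewrite /cc mulVf // Dnz.
transitivity (cc * (gx (cf i) * gx (cf j)) * (cc * (d ^ m)%:R)); first by ring.
by rewrite cD mulr1.
Qed.

Lemma Hm_herm : adj Hm = Hm.
Proof.
apply/matrixP => i j; rewrite !mxE !rmorphM /= fmorphV /= /gx !conjC_nat.
by rewrite (mulrC (_%:R)).
Qed.

Lemma Hm_row : exists i, row i Hm != 0.
Proof.
pose x := emb [ffun _ => z]; exists (enum_rank x).
apply/negP => /eqP e; have := congr1 (fun M : 'rV[C]_N => M 0 (enum_rank x)) e.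
rewrite !mxE /cf enum_rankK gx_emb !mulr1 => /eqP; rewrite invr_eq0.
by rewrite (negbTE Dnz).
Qed.


Definition Px (s : 'I_n -> 'M[C]_d) (y x : conf d n) : C := \prod_(q < n) s q (y q) (x q).

Lemma Px_emb s a b : Px s (emb b) (emb a) =
  \prod_(j < m) (s (lshift (m + r) j) (b j) (a j) * s (rshift m (lshift r j)) (b j) (a j))
  * \prod_(t < r) s (rshift m (rshift m t)) z z.
Proof.
rewrite /Px big_split_ord /= big_split_ord /= big_split /= mulrA.
congr (_ * _ * _); apply: eq_bigr => j _; by rewrite ?emb_l ?emb_m ?emb_r.
Qed.

Lemma tr_eq s : \tr (Hm *m product_state s) = cc * \sum_a \sum_b Px s (emb b) (emb a).
Proof.
rewrite /mxtrace.
transitivity (cc * \sum_(i < N) gx (cf i) * \sum_(l < N) gx (cf l) * Px s (cf l) (cf i)).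
  rewrite mulr_sumr; apply: eq_bigr => i _; rewrite mxE mulr_sumr mulr_sumr.
  by apply: eq_bigr => l _; rewrite !mxE /Px; ring.
congr (_ * _).
under eq_bigr => i _ do rewrite (L_sum (fun y => gx y * Px s y (cf i))) G_sum.
by rewrite (L_sum (fun x => gx x * \sum_b Px s (emb b) x)) G_sum.
Qed.


Lemma tr_bound s : (forall q, density (s q)) -> \tr (Hm *m product_state s) <= 1 / (d ^ m)%:R.
Proof.
move=> hs; rewrite tr_eq div1r -/cc.
under eq_bigr do under eq_bigr do rewrite Px_emb.
rewrite -[X in _ <= X]mulr1; apply: ler_wpM2l.
  by rewrite /cc invr_ge0 ler0n.
under eq_bigr do rewrite -mulr_suml.
rewrite -mulr_suml.
set G2 := fun (j : 'I_m) (al be : 'I_d) =>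
  s (lshift (m + r) j) be al * s (rshift m (lshift r j)) be al.
have eP : \sum_(a : {ffun 'I_m -> 'I_d}) \sum_(b : {ffun 'I_m -> 'I_d}) \prod_(j < m) G2 j (a j) (b j)
   = \prod_(j < m) \sum_al \sum_be G2 j al be.
  rewrite bigA_distr_bigA /=; apply: eq_bigr => a _.
  by rewrite bigA_distr_bigA.
rewrite eP; apply: mulr_ile1.
- by apply: prodr_ge0 => j _; case/andP: (pair_bound (hs (lshift (m + r) j)) (hs (rshift m (lshift r j)))).
- by apply: prodr_ge0 => t _; case/andP: (dens_diag z (hs (rshift m (rshift m t)))).
- by apply: prodr_ile1 => j _; exact: (pair_bound (hs (lshift (m + r) j)) (hs (rshift m (lshift r j)))).
- by apply: prodr_ile1 => t _; exact: (dens_diag z (hs (rshift m (rshift m t)))).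
Qed.

End Main.
End Pair.

Lemma card_setT_eq (n k : nat) (nk : n = k) (S : {set 'I_n}) : (#|S| == k) = (S == setT).
Proof.
rewrite eqEcard subsetT cardsT card_ord /= -nk.
apply/eqP/idP => [->//|h]; apply/eqP; rewrite eqn_leq h andbT.
by rewrite -[X in (_ <= X)%N](card_ord n) max_card.
Qed.


Theorem mainTheorem8 (R : realType) (d k : nat) (hd : (2 <= d)%N) (hk : (2 <= k)%N) :
  exists (n : nat) (h : {set 'I_n} -> 'M[R[i]]_(qdim d n)) (OPT : R[i]),
    [/\ klocal_instance k h,
        largest_eigenvalue (hamiltonian k h) OPT,
        0 < OPT &
        forall s : 'I_n -> 'M[R[i]]_d,
          (forall q, density (s q)) ->
          \tr (hamiltonian k h *m product_state s) <= OPT / (d ^ (k./2))%:R].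
Proof.
have dpos : (0 < d)%N by apply: ltnW.
pose z : 'I_d := Ordinal dpos.
set m := k./2; set r := odd k.
have nk : (m + (m + r))%N = k by rewrite addnA addnn addnC odd_double_half.
pose A := Hm R m r z.
exists (m + (m + r))%N, (fun _ => A), 1.
have eH : hamiltonian k (fun _ => A) = A.
  by rewrite /hamiltonian (big_pred1 setT) // => S; rewrite /= (card_setT_eq nk).
rewrite eH; split.
- move=> S cS; have /eqP eS : S == setT by rewrite -(card_setT_eq nk) cS.
  rewrite eS; split.
  + split.
      move=> i j /negP []; apply/forallP => q; by rewrite in_setT.
    move=> i j i' j' _ _ hi hj.
    have ei : i = i'.
      apply: enum_val_inj; apply/ffunP => q.
      by move/forallP: hi => /(_ q); rewrite in_setT => /eqP.
    have ej : j = j'.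
      apply: enum_val_inj; apply/ffunP => q.
      by move/forallP: hj => /(_ q); rewrite in_setT => /eqP.
    by rewrite ei ej.
  + exact: proj_psd (Hm_herm R m r z) (Hm_idem R m r z dpos).
  + exact: proj_opnorm (Hm_herm R m r z) (Hm_idem R m r z dpos).
- have [i0 ni0] := Hm_row R m r z dpos.
  exact: proj_eig (Hm_idem R m r z dpos) ni0.
- exact: ltr01.
- move=> s hs; exact: tr_bound.
Qed.
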